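(* Let $1 \leq n < \omega$, let $H$ be a set of ordinals, and let $\langle u_b \mid b \in [H]^n \rangle$ be a uniform $n$-dimensional $\Delta$-system, witnessed by an ordinal $\rho$ and sets $\langle \mathbf{r}_{\mathbf{m}} \mid \mathbf{m} \subseteq n \rangle$. Then: (1) for all $\mathbf{m} \subseteq n$ and all $a, b \in [H]^n$, if $a[\mathbf{m}] = b[\mathbf{m}]$, then $u_a[\mathbf{r}_{\mathbf{m}}] = u_b[\mathbf{r}_{\mathbf{m}}]$; (2) $\langle u_b \mid b \in [H]^n \rangle$ is an $n$-dimensional $\Delta$-system.
   Context: Natural numbers are von Neumann ordinals, so $n = \{0, \dots, n-1\}$. $[H]^k$ denotes the set of $k$-element subsets of $H$. For a set $u$ of ordinals, $\mathrm{otp}(u)$ is its order type; for $i < \mathrm{otp}(u)$, $u(i)$ is the unique $\alpha \in u$ with $\mathrm{otp}(u \cap \alpha) = i$; for $\mathbf{i} \subseteq \mathrm{otp}(u)$, $u[\mathbf{i}] := \{u(i) \mid i \in \mathbf{i}\}$. Sets of ordinals $a, b$ are aligned if $\mathrm{otp}(a) = \mathrm{otp}(b)$ and for every $\gamma \in a \cap b$, $\mathrm{otp}(a \cap \gamma) = \mathrm{otp}(b \cap \gamma)$. Let $\mathbf{r}(a,b) := \{ i < \mathrm{otp}(a) \mid a(i) \in b\}$. A family $\langle u_b \mid b \in [H]^n \rangle$ of sets of ordinals is a uniform $n$-dimensional $\Delta$-system, witnessed by an ordinal $\rho$ and sets $\mathbf{r}_{\mathbf{m}} \subseteq \rho$ ($\mathbf{m}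 \subseteq n$), if: (i) $\mathrm{otp}(u_b) = \rho$ for all $b \in [H]^n$; (ii) for all $a, b \in [H]^n$ and $\mathbf{m} \subseteq n$, if $a$ and $b$ are aligned with $\mathbf{r}(a,b) = \mathbf{m}$, then $u_a$ and $u_b$ are aligned with $\mathbf{r}(u_a, u_b) = \mathbf{r}_{\mathbf{m}}$; (iii) $\mathbf{r}_{\mathbf{m}_0 \cap \mathbf{m}_1} = \mathbf{r}_{\mathbf{m}_0} \cap \mathbf{r}_{\mathbf{m}_1}$ for all $\mathbf{m}_0, \mathbf{m}_1 \subseteq n$. A family of sets $\langle u_b \mid b \in [H]^n \rangle$ is an $n$-dimensional $\Delta$-system if there is a family of roots $\langle R^{\mathbf{m}}_a \mid \mathbf{m} \subseteq n,\ a \in [H]^{|\mathbf{m}|} \rangle$ such that for all $b, b' \in [H]^n$, if $b$ and $b'$ are aligned and $\mathbf{r}(b,b') = \mathbf{m}$, then $u_b \cap u_{b'} = R^{\mathbf{m}}_{b \cap b'}$. *)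

(* Defs.v *)
From mathcomp Require Import all_boot all_order.
From mathcomp Require Import boolp classical_sets.
Import Order.TTheory.



Unset Printing Implicit Defensive.

Local Open Scope classical_set_scope.
Local Open Scope order_scope.

(* Ordinals are modelled by the elements of an arbitrary well-ordered type
   [O] (an orderType whose strict order is well-founded); natural numbers
   n = {0,...,n-1} are modelled by [nat] with its usual order.  Order types
   are represented by an index type [I] (either [nat] or [O]). *)

Section Defs.
Context {d : Order.disp_t} {O : orderType d}.

Definition below {dI : Order.disp_t} {I : orderType dI} (r : I) : set I :=
  [set i | i < r].

Definition is_otp {dI : Order.disp_t} {I : orderType dI} (u : set O) (r : I)
  : Prop :=
  exists f : I -> O,
    (forall i j, i < j -> j < r -> f i < f j) /\
    (forall x, u x <-> exists2 i, i < r & f i = x).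

Definition elem_at {dI : Order.disp_t} {I : orderType dI} (u : set O) (i : I)
  (x : O) : Prop :=
  u x /\ is_otp (u `&` below x) i.

Definition img {dI : Order.disp_t} (I : orderType dI) (u : set O) (ii : set I)
  : set O :=
  [set x | exists2 i, ii i & elem_at u i x].

Definition rr {dI : Order.disp_t} (I : orderType dI) (a b : set O) : set I :=
  [set i | exists2 x, elem_at a i x & b x].

Definition aligned {dI : Order.disp_t} (I : orderType dI) (a b : set O) : Prop :=
  (exists r : I, is_otp a r /\ is_otp b r) /\
  (forall g, a g -> b g ->
     exists i : I, is_otp (a `&` below g) i /\ is_otp (b `&` below g) i).

Definition nsubsets (H : set O) (n : nat) : set (set O) :=
  [set b | b `<=` H /\ is_otp b n].

Definition uniform_delta_system (H : set O) (n : nat) (u : set O -> set O)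
  (rho : O) (r : set nat -> set O) : Prop :=
  [/\ (forall m, m `<=` below n -> r m `<=` below rho),
      (forall b, nsubsets H n b -> is_otp (u b) rho),
      (forall a b (m : set nat), m `<=` below n ->
         nsubsets H n a -> nsubsets H n b ->
         aligned nat a b -> rr nat a b = m ->
         aligned O (u a) (u b) /\ rr O (u a) (u b) = r m)
    & (forall m0 m1, m0 `<=` below n -> m1 `<=` below n ->
         r (m0 `&` m1) = r m0 `&` r m1)].

(* n-dimensional Delta-system: roots R^m_a, a ∈ [H]^{|m|} *)
Definition delta_system (H : set O) (n : nat) (u : set O -> set O) : Prop :=
  exists R : set nat -> set O -> set O,
    forall b b' (m : set nat), m `<=` below n ->
      nsubsets H n b -> nsubsets H n b' ->
      aligned nat b b' -> rr nat b b' = m ->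
      u b `&` u b' = R m (b `&` b').

End Defs.

(* Main.v *)
Require Import Defs.
From mathcomp Require Import all_boot all_order.
From mathcomp Require Import boolp classical_sets.
Import Order.TTheory.
Local Open Scope classical_set_scope.
Local Open Scope order_scope.

Section Gen.
Context {d : Order.disp_t} {O : orderType d}.
Context {dI : Order.disp_t} {I : orderType dI}.
Hypothesis wfI : well_founded (fun x y : I => x < y).

Definition enum_of (u : set O) (r : I) (f : I -> O) :=
  (forall i j, i < j -> j < r -> f i < f j) /\
  (forall x, u x <-> exists2 i, i < r & f i = x).

Lemma incr_lt {u r f i j} : enum_of u r f -> i < r -> j < r -> (f i < f j) = (i < j).
Proof.
move=> [inc _] ir jr; case: (ltgtP i j) => [ij|ji|ij].
- by rewrite inc.
- by apply/negbTE; rewrite -leNgt ltW // inc.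
- by rewrite ij ltxx.
Qed.

Lemma enum_uniq {u r r' f g} : enum_of u r f -> enum_of u r' g ->
  forall i, i < r -> i < r' /\ f i = g i.
Proof.
move=> ef eg; elim/(well_founded_induction wfI) => i IH ir.
have : u (f i) by apply/ef.2; exists i.
move/eg.2 => [k kr' gk].
case: (ltgtP k i) => [ki|ik|ki].
- have [_ fg] := IH k ki (lt_trans ki ir).
  have := incr_lt ef (lt_trans ki ir) ir.
  by rewrite fg gk ltxx ki.
- have ir' : i < r' := lt_trans ik kr'.
  have : u (g i) by apply/eg.2; exists i.
  move/ef.2 => [l lr fl].
  case: (ltgtP l i) => [li|il|li].
  + have [_ fg] := IH l li (lt_trans li ir).
    have := incr_lt eg (lt_trans li ir') ir'.
    by rewrite -fg fl ltxx li.
  + have h1 := incr_lt ef ir lr; rewrite il fl in h1.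
    have h2 := incr_lt eg ir' kr'; rewrite ik gk in h2.
    by have := lt_trans h1 h2; rewrite ltxx.
  + have h2 := incr_lt eg ir' kr'; rewrite ik gk -fl li in h2.
    by rewrite ltxx in h2.
- by rewrite ki in kr' gk; rewrite gk.
Qed.

Lemma otp_uniq {u r r' f g} : enum_of u r f -> enum_of u r' g -> r = r'.
Proof.
move=> ef eg; case: (ltgtP r r') => // [rr'|r'r].
- have : u (g r) by apply/eg.2; exists r.
  move/ef.2 => [l lr fl].
  have [_ e] := enum_uniq ef eg _ lr.
  have := incr_lt eg (lt_trans lr rr') rr'.
  by rewrite -e fl ltxx lr.
- have : u (f r') by apply/ef.2; exists r'.
  move/eg.2 => [l lr fl].
  have [_ e] := enum_uniq eg ef _ lr.
  have := incr_lt ef (lt_trans lr r'r) r'r.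
  by rewrite -e fl ltxx lr.
Qed.

Lemma enum_restr {u r f k} : enum_of u r f -> k < r ->
  enum_of (u `&` below (f k)) k f.
Proof.
move=> ef kr; split.
  by move=> i j ij jk; apply: ef.1 => //; exact: lt_trans jk kr.
move=> x; split.
- move=> [/ef.2 [i ir <-]]; rewrite /below /= => fik.
  by exists i => //; rewrite -(incr_lt ef ir kr).
- move=> [i ik <-]; split.
    by apply/ef.2; exists i => //; exact: lt_trans ik kr.
  by rewrite /below /= (incr_lt ef (lt_trans ik kr) kr).
Qed.

Lemma elem_atE {u r f} i x : enum_of u r f -> elem_at u i x <-> i < r /\ f i = x.
Proof.
move=> ef; split.
- move=> [ux [g eg]]; move/ef.2: ux => [k kr fk]; subst x.
  by have <- := otp_uniq (enum_restr ef kr) eg.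
- move=> [ir <-]; split; first by apply/ef.2; exists i.
  by exists f; exact: enum_restr ef ir.
Qed.

Lemma img_rr a b r f : enum_of a r f -> img I a (rr I a b) = a `&` b.
Proof.
move=> ef; apply/seteqP; split => x.
- move=> [i [y ey by'] ex].
  move/(elem_atE _ _ ef): ey => [_ fy]; move/(elem_atE _ _ ef): ex => [ir fx].
  by split; [apply/ef.2; exists i | rewrite -fx fy].
- move=> [ax bx]; move/ef.2: (ax) => [i ir fx].
  by exists i; [exists x => //|]; apply/(elem_atE _ _ ef).
Qed.

Lemma aligned_inj a b r r' f g : enum_of a r f -> enum_of b r' g ->
  aligned I a b -> forall i j, i < r -> j < r' -> f i = g j -> i = j.
Proof.
move=> ef eg [_ al] i j ir jr e.
have ax : a (f i) by apply/ef.2; exists i.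
have bx : b (f i) by rewrite e; apply/eg.2; exists j.
have [k [[h1 e1] [h2 e2]]] := al _ ax bx.
have -> := otp_uniq (enum_restr ef ir) e1.
rewrite e in e2.
by have -> := otp_uniq (enum_restr eg jr) e2.
Qed.

Lemma inj_aligned a b r f g : enum_of a r f -> enum_of b r g ->
  (forall i j, i < r -> j < r -> f i = g j -> i = j) -> aligned I a b.
Proof.
move=> ef eg hinj; split.
  by exists r; split; [exists f | exists g].
move=> x ax bx; move/ef.2: ax => [i ir fi]; move/eg.2: bx => [j jr gj].
have ij := hinj i j ir jr (etrans fi (esym gj)); subst j.
exists i; split; first by exists f; rewrite -fi; exact: enum_restr ef ir.
by exists g; rewrite -gj; exact: enum_restr eg ir.
Qed.

Lemma rrE a b r f : enum_of a r f -> rr I a b = [set i | i < r /\ b (f i)].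
Proof.
move=> ef; apply/seteqP; split => i.
- by move=> [x /(elem_atE _ _ ef) [ir <-] bx].
- by move=> [ir bf]; exists (f i) => //; apply/(elem_atE _ _ ef).
Qed.

Lemma imgE a r f m : enum_of a r f ->
  img I a m = [set x | exists2 i, m i /\ i < r & f i = x].
Proof.
move=> ef; apply/seteqP; split => x.
- by move=> [i mi /(elem_atE _ _ ef) [ir <-]]; exists i.
- by move=> [i [mi ir] <-]; exists i => //; apply/(elem_atE _ _ ef).
Qed.

End Gen.

Lemma wf_nat : well_founded (fun x y : nat => (x < y)%O).
Proof.
move=> x; elim: x {-2}x (leqnn x) => [|k IH] y hy; constructor => z /= hz.
  by move: (leq_trans hz hy).
by apply: IH; rewrite -ltnS (leq_trans hz hy).
Qed.

Section Nat.
Context {d : Order.disp_t} {O : orderType d}.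

Definition incrn (n : nat) (x : nat -> O) :=
  forall i j : nat, (i < j)%O -> (j < n)%O -> x i < x j.

Lemma diff1 n k (x y : nat -> O) : incrn n x -> incrn n y ->
  (forall i, (i < n)%O -> i <> k -> x i = y i) ->
  forall i j, (i < n)%O -> (j < n)%O -> x i = y j -> i = j.
Proof.
move=> ix iy hd i j ilt jlt e.
case: (ltgtP i j) => // [ij|ji].
- case: (eqVneq j k) => [jk|/eqP jk].
  + have ik : i <> k by move=> ik; rewrite ik -jk ltxx in ij.
    by have := iy i j ij jlt; rewrite -e -(hd i ilt ik) ltxx.
  + by have := ix i j ij jlt; rewrite e -(hd j jlt jk) ltxx.
- case: (eqVneq i k) => [ik|/eqP ik].
  + have jk : j <> k by move=> jk; rewrite jk -ik ltxx in ji.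
    by have := ix j i ji ilt; rewrite e -(hd j jlt jk) ltxx.
  + by have := iy j i ji ilt; rewrite -(hd i ilt ik) -e ltxx.
Qed.

Definition mn (x y : O) := if x < y then x else y.
Lemma mn_lel x y : mn x y <= x.
Proof. by rewrite /mn; case: ifP => [_|/negbT]; [exact: lexx| rewrite -leNgt]. Qed.
Lemma mn_ler x y : mn x y <= y.
Proof. by rewrite /mn; case: ifP => [/ltW //|_]; exact: lexx. Qed.
Lemma mn_lt x y x' y' : x < x' -> y < y' -> mn x y < mn x' y'.
Proof.
move=> h1 h2; rewrite [mn x' y']/mn; case: ifP => _.
  exact: le_lt_trans (mn_lel _ _) h1.
exact: le_lt_trans (mn_ler _ _) h2.
Qed.
Lemma mn_or x y : mn x y = x \/ mn x y = y.
Proof. by rewrite /mn; case: ifP; auto. Qed.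
Lemma mn_id x : mn x x = x.
Proof. by rewrite /mn; case: ifP. Qed.

Definition ck (z w : nat -> O) (k : nat) (i : nat) := if (i < k)%N then z i else w i.

Lemma ck_incr n z w k : incrn n z -> incrn n w ->
  (forall i, (i < n)%O -> z i <= w i) -> incrn n (ck z w k).
Proof.
move=> iz iw zw i j ij jn; rewrite /ck.
have i_n : (i < n)%O := lt_trans ij jn.
case: (ltnP j k) => jk.
  have -> : (i < k)%N by exact: (ltn_trans ij jk).
  exact: iz.
case: ifP => _; last exact: iw.
exact: le_lt_trans (zw i i_n) (iw i j ij jn).
Qed.
End Nat.

Theorem proposition2p6 (d : Order.disp_t) (O : orderType d)
  (wfO : well_founded (fun x y : O => (x < y)%O))
  (n : nat) (hn : (1 <= n)%N) (H : set O) (u : set O -> set O)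
  (rho : O) (r : set nat -> set O)
  (hu : uniform_delta_system H n u rho r) :
  (forall (m : set nat) (a b : set O), m `<=` below n ->
     nsubsets H n a -> nsubsets H n b ->
     img nat a m = img nat b m ->
     img O (u a) (r m) = img O (u b) (r m)) /\
  delta_system H n u.
Proof.
case: hu => hr hotp hal hcap.
pose Agree m s t := forall F G, enum_of (u s) rho F -> enum_of (u t) rho G ->
  forall i, r m i -> F i = G i.
have mono : forall m M, m `<=` below n -> M `<=` below n -> m `<=` M -> r m `<=` r M.
  move=> m M hm hM mM i rmi.
  have e : r (setI m M) = setI (r m) (r M) := hcap m M hm hM.
  by rewrite (setIidl mM) in e; rewrite e in rmi; case: rmi.
have step : forall m s t es et, m `<=` below n -> nsubsets H n s -> nsubsets H n t ->
   enum_of s n es -> enum_of t n et ->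
   (forall i j, (i < n)%O -> (j < n)%O -> es i = et j -> i = j) ->
   (forall i, m i -> es i = et i) -> Agree m s t.
  move=> m s t es et hm hs ht ees eet hinj hag F G eF eG i rmi.
  have al := inj_aligned _ _ _ _ _ ees eet hinj.
  have hM : rr nat s t `<=` below n by rewrite (rrE wf_nat _ _ _ _ ees) => j [].
  have mM : m `<=` rr nat s t.
    move=> j mj; rewrite (rrE wf_nat _ _ _ _ ees); split; first exact: hm.
    by rewrite hag //; apply/eet.2; exists j => //; exact: hm.
  have [alO rrO] := hal s t _ hM hs ht al erefl.
  have rMi := mono _ _ hm hM mM i rmi.
  have irho : (i < rho)%O := hr _ hM i rMi.
  rewrite -rrO (rrE wfO _ _ _ _ eF) in rMi.
  case: rMi => _ /eG.2 [j jr Gj].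
  have ij := aligned_inj wfO _ _ _ _ _ _ eF eG alO _ _ irho jr (esym Gj).
  by subst j; rewrite Gj.
have Asym : forall m s t, Agree m s t -> Agree m t s.
  by move=> m s t A F G eF eG i mi; rewrite (A G F eG eF i mi).
have Atr : forall m s t w, nsubsets H n t -> Agree m s t -> Agree m t w -> Agree m s w.
  move=> m s t w ht A1 A2 F G eF eG i mi; have [K eK] := hotp t ht.
  by rewrite (A1 F K eF eK i mi) (A2 K G eK eG i mi).
pose C (z w : nat -> O) (k : nat) : set O := [set x | exists2 i, (i < n)%O & ck z w k i = x].
have chain : forall m z w W, m `<=` below n -> nsubsets H n W -> enum_of W n w ->
   incrn n z -> (forall i, (i < n)%O -> z i <= w i) -> (forall i, (i < n)%O -> H (z i)) ->
   (forall i, m i -> z i = w i) ->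
   forall k, [/\ nsubsets H n (C z w k), enum_of (C z w k) n (ck z w k) & Agree m W (C z w k)].
  move=> m z w W hm hW ew iz zw hz hzw.
  have eC : forall k, enum_of (C z w k) n (ck z w k).
    by move=> k; split; [exact: ck_incr iz ew.1 zw | move=> x].
  have nC : forall k, nsubsets H n (C z w k).
    move=> k; split; last by exists (ck z w k); exact: eC k.
    move=> x [i ilt <-]; rewrite /ck; case: ifP => _; first exact: hz.
    by apply: hW.1; apply/ew.2; exists i.
  elim => [|k IH].
    split => //; apply: (step m W _ w (ck z w 0) hm hW (nC 0) ew (eC 0)).
      by apply: (diff1 n n _ _ ew.1 (eC 0).1) => i _ _; rewrite /ck ltn0.
    by move=> i _; rewrite /ck ltn0.
  case: IH => _ _ IH; split => //.
  apply: (Atr m W (C z w k) _ (nC k) IH).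
  apply: (step m _ _ (ck z w k) (ck z w k.+1) hm (nC k) (nC k.+1) (eC k) (eC k.+1)).
    apply: (diff1 n k _ _ (eC k).1 (eC k.+1).1) => i _ ik.
    by rewrite /ck ltnS [(i <= k)%N]leq_eqVlt; case: (i =P k) => [/ik|].
  by move=> i mi; rewrite /ck (hzw i mi); case: ifP; case: ifP.
have P1 : forall (m : set nat) (a b : set O), m `<=` below n ->
     nsubsets H n a -> nsubsets H n b ->
     img nat a m = img nat b m ->
     img O (u a) (r m) = img O (u b) (r m).
  move=> m a b hm ha hb himg.
  have [ea eea] := ha.2; have [eb eeb] := hb.2.
  have key : forall i, m i -> ea i = eb i.
    elim/(well_founded_induction wf_nat) => i IH mi.
    have inn : (i < n)%O := hm i mi.
    have : img nat a m (ea i) by rewrite (imgE wf_nat _ _ _ _ eea); exists i.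
    rewrite himg (imgE wf_nat _ _ _ _ eeb) => -[j [mj jn] ej].
    have : img nat b m (eb i) by rewrite (imgE wf_nat _ _ _ _ eeb); exists i.
    rewrite -himg (imgE wf_nat _ _ _ _ eea) => -[k [mk kn] ek].
    case: (ltgtP j i) => [ji|ij|ji].
    - by have := incr_lt eea jn inn; rewrite (IH j ji mj) ej ltxx ji.
    - case: (ltgtP k i) => [ki|ik|ki].
      + by have := incr_lt eeb kn inn; rewrite -(IH k ki mk) ek ltxx ki.
      + have h1 := incr_lt eea inn kn; rewrite ik ek in h1.
        have h2 := incr_lt eeb inn jn; rewrite ij ej in h2.
        by have := lt_trans h1 h2; rewrite ltxx.
      + by rewrite -ek ki.
    - by rewrite -ej ji.
  pose z i := mn (ea i) (eb i).
  have iz : incrn n z by move=> i j ij jn; apply: mn_lt; [exact: eea.1 | exact: eeb.1].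
  have hz : forall i, (i < n)%O -> H (z i).
    move=> i ilt; rewrite /z; case: (mn_or (ea i) (eb i)) => ->.
      by apply: ha.1; apply/eea.2; exists i.
    by apply: hb.1; apply/eeb.2; exists i.
  have [nA eA AA] := chain m z ea a hm ha eea iz (fun i _ => mn_lel _ _) hz
    (fun i mi => etrans (f_equal (mn (ea i)) (esym (key i mi))) (mn_id _)) n.
  have [nB eB AB] := chain m z eb b hm hb eeb iz (fun i _ => mn_ler _ _) hz
    (fun i mi => etrans (f_equal (mn^~ (eb i)) (key i mi)) (mn_id _)) n.
  have AAB : Agree m (C z ea n) (C z eb n).
    apply: (step m _ _ _ _ hm nA nB eA eB).
      apply: (diff1 n n _ _ eA.1 eB.1) => i ilt _.
      by have ilt' : (i < n)%N := ilt; rewrite /ck ilt'.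
    by move=> i mi; have ilt' : (i < n)%N := hm i mi; rewrite /ck ilt'.
  have Aab : Agree m a b.
    apply: (Atr m a (C z ea n) b nA AA).
    exact: (Atr m _ (C z eb n) b nB AAB (Asym _ _ _ AB)).
  have [F eF] := hotp a ha; have [G eG] := hotp b hb.
  rewrite (imgE wfO _ _ _ _ eF) (imgE wfO _ _ _ _ eG).
  apply/seteqP; split => x [i [ri ir] <-]; exists i => //.
    by rewrite (Aab F G eF eG i ri).
  by rewrite (Aab F G eF eG i ri).
split; first exact: P1.
exists (fun mm s x => exists a, nsubsets H n a /\ img nat a mm = s /\ img O (u a) (r mm) x).
move=> b b' m hm hb hb' al rrm.
have [eb eeb] := hb.2; have [F eF] := hotp b hb.
have [alO rrO] := hal b b' m hm hb hb' al rrm.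
rewrite -(img_rr wfO (u b) (u b') _ _ eF) rrO -(img_rr wf_nat b b' _ _ eeb) rrm.
apply/seteqP; split => x /=.
  by move=> hx; exists b.
by move=> [a [ha [hi hx]]]; rewrite (P1 m a b hm ha hb hi) in hx.
Qed.
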